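(* Let $V$ be a finite set with $n:=|V|$, and let $E^+,E^-\subseteq\binom{V}{2}$. Set \[ \mathcal{C}:=\{X\in\mathbb{S}^V_+ : \operatorname{tr}(X)=1,\ X_{ij}\ge 0\ \forall ij\in E^+,\ X_{ij}\le 0\ \forall ij\in E^-\} \] and let $H:=(V,E^+\cup E^-)$. Then the set of vertices of $\mathcal{C}$ is $\{e_ke_k^{\mathsf T} : k\in V,\ \deg_H(k)=n-1\}$.
   Context: $\mathbb{S}^V_+$ denotes the real symmetric positive semidefinite matrices indexed by $V$, with trace inner product; $e_k$ are standard basis vectors of $\mathbb{R}^V$; $\deg_H(k)$ is the degree of $k$ in the graph $H$. For a convex set $\mathcal{C}$ in a finite-dimensional space $\mathbb{E}$ and $\bar x\in\mathcal{C}$, the normal cone is $N_{\mathcal{C}}(\bar x):=\{c : \langle c,x\rangle\le\langle c,\bar x\rangle\ \forall x\in\mathcal{C}\}$; $\bar x$ is a vertex if $\dim N_{\mathcal{C}}(\bar x)=\dim\mathbb{E}$ (here $\mathbb{E}=\mathbb{S}^V$). *)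

(* Defs.v *)
From HB Require Import structures.
From mathcomp Require Import all_boot all_order all_algebra.
From mathcomp Require Import boolp classical_sets reals.
Set Implicit Arguments. Unset Strict Implicit. Unset Printing Implicit Defensive.
Import Order.TTheory GRing.Theory Num.Theory.
Local Open Scope ring_scope.

Section Defs.
Variables (R : realType) (n : nat).
Local Notation M := 'M[R]_n.

Definition symmx : set M := fun X => X^T = X.

Definition psdmx : set M :=
  fun X => symmx X /\ forall v : 'cV[R]_n, 0 <= (v^T *m X *m v) 0 0.

Definition trip (A B : M) : R := \tr (A^T *m B).

Definition evec (k : 'I_n) : 'cV[R]_n := delta_mx k 0.

(* the spectrahedron C of the statement; an unordered pair ij is [set i; j] *)
Definition Cset (Ep Em : {set {set 'I_n}}) : set M :=
  fun X => psdmx X /\ \tr X = 1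
        /\ (forall i j : 'I_n, [set i; j] \in Ep -> 0 <= X i j)
        /\ (forall i j : 'I_n, [set i; j] \in Em -> X i j <= 0).

Definition normal_cone (E C : set M) (xbar : M) : set M :=
  fun c => E c /\ forall x, C x -> trip c x <= trip c xbar.

Definition has_aff_indep (A : set M) (k : nat) : Prop :=
  exists p : 'I_k.+1 -> M, (forall i, A (p i)) /\
    row_free (\matrix_(i < k) mxvec (p (lift ord0 i) - p ord0)).

(* dimension of a (nonempty) set = dimension of its affine hull
   = max number k such that it contains k+1 affinely independent points
   (at most n*n, as these live in 'M_n). *)
Definition aff_dim (A : set M) : nat :=
  \max_(k < (n * n).+1 | `[< has_aff_indep A k >]) k.

Definition is_vertex (E C : set M) (xbar : M) : Prop :=
  C xbar /\ aff_dim (normal_cone E C xbar) = aff_dim E.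

End Defs.

Definition deg (n : nat) (E : {set {set 'I_n}}) (k : 'I_n) : nat :=
  #|[set e in E | k \in e]|.

(* Main.v *)
Require Import Defs.
From HB Require Import structures.
From mathcomp Require Import all_boot all_order all_algebra.
From mathcomp Require Import boolp classical_sets reals.
From mathcomp Require Import ring lra.
Import Order.TTheory GRing.Theory Num.Theory.
Local Open Scope ring_scope.
Set Implicit Arguments. Unset Strict Implicit. Unset Printing Implicit Defensive.

Section Aff.
Variables (R : realType) (n : nat).
Local Notation M := 'M[R]_n.

Lemma hai_mono (A B : set M) k :
  (forall x, A x -> B x) -> has_aff_indep A k -> has_aff_indep B k.
Proof. by move=> AB [p [pA pf]]; exists p; split => // i; apply: AB. Qed.

Lemma hai_le (A : set M) k : has_aff_indep A k -> (k <= n * n)%N.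
Proof.
move=> [p [_ pf]]; move: pf; rewrite /row_free => /eqP <-.
exact: rank_leq_col.
Qed.

Lemma hai0 (A : set M) x : A x -> has_aff_indep A 0.
Proof.
move=> Ax; exists (fun _ => x); split => //.
by rewrite /row_free -leqn0 rank_leq_row.
Qed.

Lemma aff_dim_eq (A B : set M) :
  (forall k, has_aff_indep A k <-> has_aff_indep B k) -> aff_dim A = aff_dim B.
Proof. by move=> h; rewrite /aff_dim; apply: eq_bigl => k; apply: asbool_equiv_eq. Qed.

Lemma aff_dim_ge (A : set M) k : has_aff_indep A k -> (k <= aff_dim A)%N.
Proof.
move=> h; have hk : (k < (n * n).+1)%N by rewrite ltnS; exact: hai_le h.
rewrite /aff_dim.
have -> : k = nat_of_ord (Ordinal hk) by [].
by apply: leq_bigmax_cond; apply/asboolP.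
Qed.

Lemma aff_dim_attained (A : set M) x : A x -> has_aff_indep A (aff_dim A).
Proof.
move=> Ax.
have hc : (0 < #|[pred k : 'I_(n * n).+1 | `[< has_aff_indep A k >]]|)%N.
  apply/card_gt0P; exists ord0; rewrite inE; exact (hai0 Ax).
have [i0 Hi0 E] := eq_bigmax_cond (fun k : 'I_(n * n).+1 => nat_of_ord k) hc.
rewrite /aff_dim.
move: E; rewrite (eq_bigl (fun k : 'I_(n * n).+1 => `[< has_aff_indep A k >])) // => ->.
by move: Hi0; rewrite inE.
Qed.

Lemma sum_ge_term (I : finType) (F : I -> R) a :
  (forall i, 0 <= F i) -> F a <= \sum_i F i.
Proof. by move=> h; rewrite (bigD1 a) //= lerDl sumr_ge0. Qed.

Lemma trip_sum (A B : M) : trip A B = \sum_i \sum_j A i j * B i j.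
Proof.
rewrite /trip /mxtrace [RHS]exchange_big /=; apply: eq_bigr => j _.
by rewrite mxE; apply: eq_bigr => i _; rewrite !mxE.
Qed.

Lemma tripBl (A B C : M) : trip (A - B) C = trip A C - trip B C.
Proof.
rewrite !trip_sum -sumrB; apply: eq_bigr => i _; rewrite -sumrB.
by apply: eq_bigr => j _; rewrite !mxE mulrBl.
Qed.

Lemma mxvec_dot (A B : M) :
  \sum_l mxvec A 0 l * mxvec B 0 l = \sum_i \sum_j A i j * B i j.
Proof.
rewrite pair_bigA /= (reindex _ (curry_mxvec_bij n n)) /=.
by apply: eq_bigr => [[i j]] _ /=; rewrite !mxvecE.
Qed.

Lemma hai_ext (N : set M) (D : M) k :
  (forall c, N c -> symmx c) -> symmx D -> D != 0 ->
  (forall c, N c -> trip c D = 0) ->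
  has_aff_indep N k -> has_aff_indep (@symmx R n) k.+1.
Proof.
move=> NS SD Dn0 ND [p [pN pf]].
pose v := mxvec D.
pose p' (i : 'I_k.+2) := if i == ord_max then p ord0 + D else p (inord i).
have p'0 : p' ord0 = p ord0.
  rewrite /p' /=; congr p; apply: val_inj; rewrite /= inordK //.
exists p'; split.
  move=> i; rewrite /p' /=; case: ifP => _; last exact: NS.
  by rewrite /symmx linearD /= (NS _ (pN _)) SD.
set Mo := \matrix_(i < k) mxvec (p (lift ord0 i) - p ord0).
set Mn := \matrix_(i < k.+1) mxvec (p' (lift ord0 i) - p' ord0).
have rowMo : forall i : 'I_k, row i Mo = row (widen_ord (leqnSn k) i) Mn.
  move=> i; rewrite !rowK p'0 /p' /= ifF; last first.
    by apply/negbTE; rewrite -val_eqE /= eqSS neq_ltn ltn_ord.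
  congr (mxvec (p _ - _)); apply: val_inj; rewrite /= inordK //.
  by rewrite /bump /=; apply: leq_trans (ltn_ord i) _.
have rowv : v = row ord_max Mn.
  rewrite rowK p'0 /p' /= ifT; last by rewrite -val_eqE.
  by rewrite /v addrC addKr.
have sMo : (Mo <= Mn)%MS by apply/row_subP => i; rewrite rowMo row_sub.
have sv : (v <= Mn)%MS by rewrite rowv row_sub.
have nv : ~~ (v <= Mo)%MS.
  apply/negP => /submxP [w hw].
  have h0 : Mo *m v^T = 0.
    apply/matrixP => i j; rewrite !mxE (ord1 j).
    have -> : \sum_l Mo i l * v^T l 0 = \sum_l mxvec (p (lift ord0 i) - p ord0) 0 l * mxvec D 0 l.
      by apply: eq_bigr => l _; rewrite !mxE.
    by rewrite mxvec_dot -trip_sum tripBl !ND ?subrr.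
  have h1 : (v *m v^T) 0 0 = 0 by rewrite {1}hw -mulmxA h0 mulmx0 mxE.
  move: h1; rewrite mxE.
  have -> : \sum_l v 0 l * v^T l 0 = \sum_i \sum_j D i j * D i j.
    by rewrite -mxvec_dot; apply: eq_bigr => l _; rewrite !mxE.
  have [a [b Dab]] : exists a b, D a b != 0.
    case: (pselect (exists a b, D a b != 0)) => // hne; exfalso.
    move/eqP: Dn0; apply; apply/matrixP => a b; rewrite mxE.
    case: (D a b =P 0) => // /eqP h; exfalso; apply: hne; by exists a, b.
  move=> /eqP; apply/negP; rewrite lt0r_neq0 //.
  apply: (lt_le_trans _ (sum_ge_term a _)); last first.
    by move=> i; apply: sumr_ge0 => j _; rewrite -expr2 sqr_ge0.
  apply: (lt_le_trans _ (sum_ge_term b _)); last by move=> j; rewrite -expr2 sqr_ge0.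
  by rewrite lt0r mulf_neq0 //=; have := sqr_ge0 (D a b); rewrite expr2.
have rk : \rank Mo = k by apply/eqP.
have h1 : (\rank Mo < \rank (Mo + v)%MS)%N.
  rewrite (ltn_leqif (mxrank_leqif_sup (addsmxSl Mo v))).
  by rewrite addsmx_sub submx_refl.
have h2 : (\rank (Mo + v)%MS <= \rank Mn)%N by apply: mxrankS; rewrite addsmx_sub sMo sv.
rewrite /row_free eqn_leq rank_leq_row /=.
by rewrite rk in h1; apply: leq_trans h1 h2.
Qed.
Lemma zero_lem (g h : R) :
  (forall t : R, -1 < t < 1 -> t * g + t ^+ 2 * h <= 0) -> g = 0.
Proof.
move=> H.
have a0 : 0 <= `|h| by [].
have b0 : 0 <= `|g| by [].
have hh : - `|h| <= h <= `|h| by rewrite -ler_norml.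
have gg : - `|g| <= g <= `|g| by rewrite -ler_norml.
set s := (`|h| + `|g| + 1)^-1.
have s0 : 0 < s by rewrite invr_gt0; lra.
have ss : s * (`|h| + `|g| + 1) = 1 by rewrite mulVf //; lra.
have := H (s * g).
case/andP: hh => h1 h2; case/andP: gg => g1 g2.
have t1 : -1 < s * g < 1 by apply/andP; split; nra.
move=> /(_ t1) hle.
apply/eqP; apply: contraLR hle => gn0; rewrite -ltNge.
have g2p : 0 < g * g by rewrite lt0r mulf_neq0 //=; have := sqr_ge0 g; rewrite expr2.
have h1s : 0 < 1 + s * h by nra.
have -> : s * g * g + (s * g) ^+ 2 * h = s * (g * g) * (1 + s * h) by ring.
by rewrite mulr_gt0 // mulr_gt0.
Qed.

Lemma quad_sum (X : M) (v : 'cV[R]_n) :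
  (v^T *m X *m v) 0 0 = \sum_a \sum_b v a 0 * X a b * v b 0.
Proof.
rewrite mxE; under eq_bigr do rewrite mxE mulr_suml.
rewrite exchange_big; apply: eq_bigr => a _; apply: eq_bigr => b _.
by rewrite !mxE.
Qed.

Lemma sum_delta (F : 'I_n -> R) a : \sum_i (i == a)%:R * F i = F a.
Proof.
rewrite (bigD1 a) //= big1 ?addr0 ?eqxx ?mul1r // => i /negbTE ->.
by rewrite mul0r.
Qed.

Lemma sum2 (F : 'I_n -> R) a b x y :
  \sum_j F j * ((j == a)%:R * x + (j == b)%:R * y) = F a * x + F b * y.
Proof.
under eq_bigr do rewrite mulrDr.
rewrite big_split /= -(sum_delta (fun j => F j * x) a) -(sum_delta (fun j => F j * y) b).
by congr (_ + _); apply: eq_bigr => j _; rewrite mulrCA.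
Qed.

Lemma psd_quad2 (X : M) a b x y : psdmx X ->
  0 <= x * x * X a a + x * y * (X a b + X b a) + y * y * X b b.
Proof.
move=> [_ hX].
pose v : 'cV[R]_n := \col_i ((i == a)%:R * x + (i == b)%:R * y).
have := hX v; rewrite quad_sum.
have -> : \sum_a0 \sum_b0 v a0 0 * X a0 b0 * v b0 0 =
   \sum_a0 (X a0 a * x + X a0 b * y) * ((a0 == a)%:R * x + (a0 == b)%:R * y).
  apply: eq_bigr => i _.
  rewrite (eq_bigr (fun j => (v i 0 * X i j) * ((j == a)%:R * x + (j == b)%:R * y))); last first.
    by move=> j _; rewrite !mxE.
  by rewrite sum2 !mxE; ring.
rewrite sum2.
suff -> : (X a a * x + X a b * y) * x + (X b a * x + X b b * y) * y =
   x * x * X a a + x * y * (X a b + X b a) + y * y * X b b by [].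
ring.
Qed.

Lemma psd_diag (X : M) a : psdmx X -> 0 <= X a a.
Proof. by move=> h; have := psd_quad2 a a 1 0 h; lra. Qed.

Lemma tripDr (c A B : M) : trip c (A + B) = trip c A + trip c B.
Proof. by rewrite /trip mulmxDr mxtraceD. Qed.

Lemma tripZr (c A : M) s : trip c (s *: A) = s * trip c A.
Proof. by rewrite /trip -scalemxAr mxtraceZ. Qed.

Lemma tangent (C : set M) (X c L Q : M) :
  (forall Y, C Y -> trip c Y <= trip c X) -> \tr X = 1 ->
  (forall t, -1 < t < 1 ->
     0 < \tr (X + t *: L + t ^+ 2 *: Q) /\
     C ((\tr (X + t *: L + t ^+ 2 *: Q))^-1 *: (X + t *: L + t ^+ 2 *: Q))) ->
  trip c L = \tr L * trip c X.
Proof.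
move=> hN trX hC.
apply/eqP; rewrite -subr_eq0; apply/eqP.
apply: (@zero_lem _ (trip c Q - \tr Q * trip c X)) => t /hC [T0 CY].
have := hN _ CY; rewrite tripZr.
rewrite ler_pdivrMl // !mxtraceD !mxtraceZ trX !tripDr !tripZr => h.
have -> : t * (trip c L - \tr L * trip c X) + t ^+ 2 * (trip c Q - \tr Q * trip c X)
  = (trip c X + t * trip c L + t ^+ 2 * trip c Q) -
    (1 + t * \tr L + t ^+ 2 * \tr Q) * trip c X by ring.
by rewrite subr_le0.
Qed.

Lemma sym_entry (X : M) a b : symmx X -> X a b = X b a.
Proof. by move=> h; rewrite -{1}h mxE. Qed.

Lemma tripBr (c A B : M) : trip c (A - B) = trip c A - trip c B.
Proof. by rewrite /trip mulmxBr linearB. Qed.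

Lemma Cset_scale (Ep Em : {set {set 'I_n}}) (P : M) :
  P^T = P -> (forall v : 'cV[R]_n, 0 <= (v^T *m P *m v) 0 0) -> 0 < \tr P ->
  (forall i j, [set i; j] \in Ep -> 0 <= P i j) ->
  (forall i j, [set i; j] \in Em -> P i j <= 0) ->
  Cset Ep Em ((\tr P)^-1 *: P).
Proof.
move=> sP qP tP hp hm; split; [split|split; [|split]].
- by rewrite /symmx linearZ /= sP.
- move=> v; rewrite -scalemxAr -scalemxAl mxE.
  by apply: mulr_ge0; [rewrite invr_ge0 ltW|].
- by rewrite mxtraceZ mulVf // lt0r_neq0.
- move=> i j h; rewrite mxE; apply: mulr_ge0; [rewrite invr_ge0 ltW //|exact: hp].
- move=> i j h; rewrite mxE; apply: mulr_ge0_le0; [rewrite invr_ge0 ltW //|exact: hm].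
Qed.

Lemma caseB (Ep Em : {set {set 'I_n}}) (X : M) i j :
  Cset Ep Em X -> i != j -> 0 < X i i -> 0 < X j j ->
  exists D : M, symmx D /\ D != 0 /\
    forall c, normal_cone (@symmx R n) (Cset Ep Em) X c -> trip c D = 0.
Proof.
move=> [[sX qX] [trX [hp hm]]] nij Xi Xj.
pose s (t : R) (a : 'I_n) := 1 + t * (a == i)%:R.
pose L : M := \matrix_(a, b) (X a b * ((a == i)%:R + (b == i)%:R)).
pose Q : M := \matrix_(a, b) (X a b * ((a == i)%:R * (b == i)%:R)).
have PE : forall t, X + t *: L + t ^+ 2 *: Q = \matrix_(a, b) (s t a * X a b * s t b).
  by move=> t; apply/matrixP => a b; rewrite !mxE /s; ring.
have trL : \tr L = 2 * X i i.
  rewrite /mxtrace (eq_bigr (fun a => (a == i)%:R * (2 * X a a))); first by rewrite sum_delta.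
  by move=> a _; rewrite mxE; ring.
exists (L - \tr L *: X); split; [|split].
- apply/matrixP => a b; rewrite !mxE (sym_entry a b sX); ring.
- apply/eqP => /matrixP /(_ j j); rewrite !mxE trL.
  have -> : (j == i) = false by apply/negbTE; rewrite eq_sym.
  move=> h; have : 0 < 2 * X i i * X j j by rewrite !mulr_gt0.
  move: h; rewrite add0r mulr0 sub0r => /eqP; rewrite oppr_eq0 => /eqP ->.
  by rewrite ltxx.
move=> c [_ hN].
rewrite tripBr tripZr; apply/eqP; rewrite subr_eq0; apply/eqP.
apply: (@tangent (Cset Ep Em) X c L Q hN trX) => t /andP [t1 t2].
have s0 : forall a, 0 < s t a.
  by move=> a; rewrite /s; case: (a == i) => /=; rewrite ?mulr1 ?mulr0; lra.
have Tpos : 0 < \tr (X + t *: L + t ^+ 2 *: Q).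
  rewrite PE; apply: (lt_le_trans _ (sum_ge_term j _)).
    rewrite mxE /s.
    have -> : (j == i) = false by apply/negbTE; rewrite eq_sym.
    by rewrite mulr0 addr0 mul1r mulr1.
  move=> a; rewrite mxE; have := psd_diag a (conj sX qX); have := s0 a; nra.
split => //; rewrite PE; rewrite PE in Tpos; apply: Cset_scale => //.
- apply/matrixP => a b; rewrite !mxE (sym_entry a b sX); ring.
- move=> v; pose w : 'cV[R]_n := \col_a (s t a * v a 0).
  have := qX w; rewrite !quad_sum.
  suff -> : \sum_a \sum_b w a 0 * X a b * w b 0 =
            \sum_a \sum_b v a 0 * (\matrix_(a, b) (s t a * X a b * s t b)) a b * v b 0 by [].
  apply: eq_bigr => a _; apply: eq_bigr => b _; rewrite !mxE; ring.
- move=> a b h; rewrite mxE; have := hp a b h; have := s0 a; have := s0 b.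
  by move=> hb ha hx; rewrite -mulrA mulr_ge0 ?mulr_ge0 // ltW.
- move=> a b h; rewrite mxE; have := hm a b h; have := s0 a; have := s0 b.
  by move=> hb ha hx; rewrite -mulrA mulr_ge0_le0 ?mulr_le0_ge0 // ltW.
Qed.

Lemma ekk_entry (k a b : 'I_n) :
  (evec R k *m (evec R k)^T) a b = (a == k)%:R * (b == k)%:R.
Proof. by rewrite mxE big_ord1 !mxE !andbT. Qed.

Lemma ekk_tr (k : 'I_n) : \tr (evec R k *m (evec R k)^T) = 1.
Proof.
rewrite /mxtrace (eq_bigr (fun a : 'I_n => (a == k)%:R * 1)); first by rewrite sum_delta.
by move=> a _; rewrite ekk_entry; case: (a == k); rewrite ?mul0r ?mulr1.
Qed.

Lemma edge_neq (E : {set {set 'I_n}}) a b :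
  (forall e, e \in E -> #|e| = 2%N) -> [set a; b] \in E -> a != b.
Proof. by move=> hE /hE; rewrite cards2; case: (a != b). Qed.

Lemma caseA (Ep Em : {set {set 'I_n}}) (k j : 'I_n) :
  (forall e, e \in Ep -> #|e| = 2%N) -> (forall e, e \in Em -> #|e| = 2%N) ->
  k != j -> [set k; j] \notin Ep :|: Em ->
  exists D : M, symmx D /\ D != 0 /\
    forall c, normal_cone (@symmx R n) (Cset Ep Em) (evec R k *m (evec R k)^T) c ->
      trip c D = 0.
Proof.
move=> hEp hEm nkj nE.
set X := evec R k *m (evec R k)^T.
pose w (t : R) (a : 'I_n) := (a == k)%:R + t * (a == j)%:R.
pose L : M := \matrix_(a, b) ((a == k)%:R * (b == j)%:R + (a == j)%:R * (b == k)%:R).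
pose Q : M := \matrix_(a, b) ((a == j)%:R * (b == j)%:R : R).
have PE : forall t, X + t *: L + t ^+ 2 *: Q = \matrix_(a, b) (w t a * w t b).
  by move=> t; apply/matrixP => a b; rewrite /X !mxE big_ord1 !mxE !andbT /w; ring.
have jk : (j == k) = false by apply/negbTE; rewrite eq_sym.
exists (L - \tr L *: X); split; [|split].
- apply/matrixP => a b; rewrite /X !mxE !big_ord1 !mxE !andbT; ring.
- apply/eqP => /matrixP /(_ k j); rewrite /X !mxE !big_ord1 !mxE !andbT eqxx jk (negbTE nkj).
  by rewrite eqxx /= !mul1r !mul0r !mulr0 addr0 subr0 => /eqP; rewrite oner_eq0.
move=> c [_ hN].
rewrite tripBr tripZr; apply/eqP; rewrite subr_eq0; apply/eqP.
apply: (@tangent (Cset Ep Em) X c L Q hN (ekk_tr k)) => t /andP [t1 t2].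
have Tpos : 0 < \tr (X + t *: L + t ^+ 2 *: Q).
  rewrite PE; apply: (lt_le_trans _ (sum_ge_term k _)).
    by rewrite mxE /w eqxx (negbTE nkj) mulr0 addr0 mulr1.
  by move=> a; rewrite mxE; have := sqr_ge0 (w t a); rewrite expr2.
have wz : forall a b, [set a; b] \in Ep :|: Em -> w t a * w t b = 0.
  move=> a b hab.
  have nab : a != b.
    by move: hab; rewrite inE => /orP [] h; [apply: (edge_neq hEp h)|apply: (edge_neq hEm h)].
  have -> : w t a * w t b = ((a == k) && (b == k))%:R +
      t * (((a == k) && (b == j))%:R + ((a == j) && (b == k))%:R) +
      t ^+ 2 * ((a == j) && (b == j))%:R.
    by rewrite -!mulnb !natrM /w; ring.
  have -> : (a == k) && (b == k) = false.
    apply/negbTE/negP => /andP [/eqP ea /eqP eb]; move: nab; by rewrite ea eb eqxx.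
  have -> : (a == j) && (b == j) = false.
    apply/negbTE/negP => /andP [/eqP ea /eqP eb]; move: nab; by rewrite ea eb eqxx.
  have -> : (a == k) && (b == j) = false.
    apply/negbTE/negP => /andP [/eqP ea /eqP eb]; move: nE; by rewrite -ea -eb hab.
  have -> : (a == j) && (b == k) = false.
    apply/negbTE/negP => /andP [/eqP ea /eqP eb]; move: nE; by rewrite -ea -eb finset.setUC hab.
  by rewrite /=; ring.
split => //; rewrite PE; rewrite PE in Tpos; apply: Cset_scale => //.
- by apply/matrixP => a b; rewrite !mxE mulrC.
- move=> v; rewrite quad_sum.
  have -> : \sum_a \sum_b v a 0 * (\matrix_(a, b) (w t a * w t b)) a b * v b 0 =
     (\sum_a v a 0 * w t a) * (\sum_b v b 0 * w t b).
    rewrite mulr_suml; apply: eq_bigr => a _; rewrite mulr_sumr.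
    by apply: eq_bigr => b _; rewrite mxE; ring.
  by have := sqr_ge0 (\sum_a v a 0 * w t a); rewrite expr2.
- by move=> a b h; rewrite mxE wz // inE h.
- by move=> a b h; rewrite mxE wz // inE h orbT.
Qed.

Lemma no_D (Ep Em : {set {set 'I_n}}) (X D : M) :
  symmx D -> D != 0 ->
  (forall c, normal_cone (@symmx R n) (Cset Ep Em) X c -> trip c D = 0) ->
  aff_dim (normal_cone (@symmx R n) (Cset Ep Em) X) = aff_dim (@symmx R n) -> False.
Proof.
move=> SD Dn0 ND E.
set N := normal_cone _ _ _ in ND E.
have N0 : N 0.
  split; first by rewrite /symmx trmx0.
  move=> x _; rewrite !trip_sum !big1 // => a _; rewrite big1 // => b _; by rewrite mxE mul0r.
have h := aff_dim_attained N0.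
have h2 := hai_ext (fun c (hc : N c) => hc.1) SD Dn0 ND h.
by have := aff_dim_ge h2; rewrite E ltnn.
Qed.

Lemma fwd (Ep Em : {set {set 'I_n}}) (X : M) :
  (forall e, e \in Ep -> #|e| = 2%N) -> (forall e, e \in Em -> #|e| = 2%N) ->
  is_vertex (@symmx R n) (Cset Ep Em) X ->
  exists k, (forall j, j != k -> [set k; j] \in Ep :|: Em) /\
            X = evec R k *m (evec R k)^T.
Proof.
move=> hEp hEm [CX E]; have CX' := CX; case: CX => [[sX qX] [trX _]].
case: (pselect (exists i j, i != j /\ 0 < X i i /\ 0 < X j j)) => [[i [j [nij [Xi Xj]]]]|nB].
  have [D [SD [Dn0 ND]]] := caseB CX' nij Xi Xj.
  by case: (no_D SD Dn0 ND E).
have [k Xk] : exists k, X k k != 0.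
  case: (pselect (exists k, X k k != 0)) => // h; exfalso.
  move: trX; rewrite /mxtrace big1 => [/esym/eqP|a _]; first by rewrite oner_eq0.
  by case: (X a a =P 0) => // /eqP ha; exfalso; apply: h; exists a.
have psdX : psdmx X by [].
have Xkp : 0 < X k k by rewrite lt0r Xk psd_diag.
have X0 : forall a, a != k -> X a a = 0.
  move=> a ak; case: (X a a =P 0) => // /eqP ha; exfalso; apply: nB; exists a, k.
  by split => //; split => //; rewrite lt0r ha psd_diag.
have Xoff : forall a b, a != k -> X a b = 0.
  move=> a b ak.
  have h : 2 * X a b = 0.
    apply: (@zero_lem _ (- X b b)) => t _.
    have := psd_quad2 a b 1 (- t) psdX.
    rewrite X0 // (sym_entry b a sX); lra.
  by move/eqP: h; rewrite mulf_eq0 pnatr_eq0 /= => /eqP.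
have Xkk : X k k = 1.
  by move: trX; rewrite /mxtrace (bigD1 k) //= big1 ?addr0 // => a ak; exact: X0.
have XE : X = evec R k *m (evec R k)^T.
  apply/matrixP => a b; rewrite ekk_entry.
  case: (eqVneq a k) => [->|ak]; last by rewrite Xoff // mul0r.
  case: (eqVneq b k) => [->|bk]; first by rewrite Xkk mul1r.
  by rewrite (sym_entry k b sX) Xoff // mulr0.
case: (pselect (exists j, j != k /\ [set k; j] \notin Ep :|: Em)) => [[j [jk nE]]|h2].
  have kj : k != j by rewrite eq_sym.
  have [D [SD [Dn0 ND]]] := caseA hEp hEm kj nE.
  by rewrite XE in E; case: (no_D SD Dn0 ND E).
exists k; split => // j jk.
case: (boolP ([set k; j] \in Ep :|: Em)) => // hn; exfalso; apply: h2; by exists j.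
Qed.

Lemma ekk_C (Ep Em : {set {set 'I_n}}) (k : 'I_n) :
  (forall e, e \in Ep -> #|e| = 2%N) -> (forall e, e \in Em -> #|e| = 2%N) ->
  Cset Ep Em (evec R k *m (evec R k)^T).
Proof.
move=> hEp hEm.
have off : forall i j, i != j -> (evec R k *m (evec R k)^T) i j = 0.
  move=> i j ij; rewrite ekk_entry; case: (eqVneq i k) => [ik|ik]; last by rewrite mul0r.
  by move: ij; rewrite ik eq_sym => /negbTE ->; rewrite mulr0.
split; [split|split; [|split]].
- by apply/matrixP => a b; rewrite mxE !ekk_entry mulrC.
- move=> v; rewrite quad_sum.
  rewrite (eq_bigr (fun a => (a == k)%:R * (v a 0 * v k 0))); last first.
    move=> a _; rewrite (eq_bigr (fun b => (b == k)%:R * (v a 0 * (a == k)%:R * v b 0))).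
      by rewrite sum_delta; ring.
    by move=> b _; rewrite ekk_entry; ring.
  by rewrite sum_delta; have := sqr_ge0 (v k 0); rewrite expr2.
- exact: ekk_tr.
- by move=> i j h; rewrite off // (edge_neq hEp h).
- by move=> i j h; rewrite off // (edge_neq hEm h).
Qed.

Definition sg (Ep : {set {set 'I_n}}) (k j : 'I_n) : R :=
  if [set k; j] \in Ep then -1 else 1.

Definition c0 (Ep : {set {set 'I_n}}) (k : 'I_n) : M :=
  \matrix_(a, b) (if a == b then (if a == k then 0 else - (n%:R ^+ 2 + 1))
                  else if a == k then sg Ep k b
                  else if b == k then sg Ep k a else 0).

Lemma c0_sym Ep k : symmx (c0 Ep k).
Proof.
apply/matrixP => a b; rewrite !mxE.
case: (eqVneq a b) => [->|ab] //.
case: (eqVneq a k) => [ak|ak]; case: (eqVneq b k) => [bk|bk] //.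
by move: ab; rewrite ak bk eqxx.
Qed.

Lemma ball_bound (Ep Em : {set {set 'I_n}}) (k : 'I_n) (P Y : M) :
  (forall j, j != k -> [set k; j] \in Ep :|: Em) ->
  (forall a b, `|P a b| <= 1 / 2) -> Cset Ep Em Y ->
  trip (c0 Ep k + P) Y <= trip (c0 Ep k + P) (evec R k *m (evec R k)^T).
Proof.
move=> adj hP [[sY qY] [trY [hpY hmY]]].
have psdY : psdmx Y by [].
set c := c0 Ep k + P.
have cX : trip c (evec R k *m (evec R k)^T) = P k k.
  rewrite trip_sum (eq_bigr (fun a => (a == k)%:R * c a k)); last first.
    move=> a _; rewrite (eq_bigr (fun b => (b == k)%:R * (c a b * (a == k)%:R))).
      by rewrite sum_delta; ring.
    by move=> b _; rewrite ekk_entry; ring.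
  by rewrite sum_delta !mxE eqxx add0r.
rewrite cX.
have Yd : forall a, 0 <= Y a a by move=> a; exact: psd_diag.
have trY' : Y k k + \sum_(a | a != k) Y a a = 1.
  by rewrite -trY /mxtrace [RHS](bigD1 k).
set s := \sum_(a | a != k) Y a a in trY'.
have s0 : 0 <= s by apply: sumr_ge0.
have Yle : forall a, a != k -> Y a a <= s.
  by move=> a ak; rewrite /s (bigD1 a) //= lerDl sumr_ge0.
have Yab : forall a b, `|Y a b| <= (Y a a + Y b b) / 2.
  move=> a b; have := psd_quad2 a b 1 1 psdY; have := psd_quad2 a b 1 (-1) psdY.
  rewrite (sym_entry b a sY) ler_norml; move=> h1 h2; apply/andP; split; lra.
have hPab : forall a b, - (1 / 2) <= P a b <= 1 / 2 by move=> a b; rewrite -ler_norml.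
have offb : forall a b, a != b -> c a b * Y a b <= s / 2.
  move=> a b ab; rewrite !mxE (negbTE ab) /sg.
  have := hPab a b => /andP [p1 p2].
  case: (eqVneq a k) => [ak|ak].
    have bk : b != k by rewrite -ak eq_sym.
    have := adj b bk; rewrite inE; rewrite -ak.
    case: ifP => hb /=.
      by move=> _; have := hpY a b hb; nra.
    by move=> hm; have := hmY a b hm; nra.
  case: (eqVneq b k) => [bk|bk].
    have := adj a ak; rewrite inE -bk.
    case: ifP => ha /=.
      by move=> _; have := hpY a b; rewrite finset.setUC => /(_ ha); nra.
    by move=> hm; have := hmY a b; rewrite finset.setUC => /(_ hm); nra.
  rewrite add0r.
  have := Yab a b; have := Yle a ak; have := Yle b bk.
  have : P a b * Y a b <= `|P a b| * `|Y a b|.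
    by rewrite -normrM ler_norm.
  have := hP a b; have := normr_ge0 (Y a b); nra.
have diagb : forall a, a != k -> c a a * Y a a <= (1 / 2 - (n%:R ^+ 2 + 1)) * Y a a.
  move=> a ak; rewrite !mxE eqxx (negbTE ak); have := hPab a a; have := Yd a; nra.
rewrite trip_sum.
have inner : forall a, \sum_b c a b * Y a b <= c a a * Y a a + n%:R * (s / 2).
  move=> a; rewrite (bigD1 a) //= lerD2l.
  have offb' : forall b, b != a -> c a b * Y a b <= s / 2.
    by move=> b hb; apply: offb; rewrite eq_sym.
  apply: (le_trans (ler_sum _ offb')).
  rewrite big_mkcond /=.
  have hb : forall b : 'I_n, true -> (if b != a then s / 2 else 0) <= s / 2.
    by move=> b _; case: (b != a) => //; rewrite divr_ge0.
  apply: (le_trans (ler_sum _ hb)).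
  by rewrite sumr_const card_ord mulr_natl.
have diag : \sum_a c a a * Y a a <= P k k * Y k k + (1 / 2 - (n%:R ^+ 2 + 1)) * s.
  rewrite (bigD1 k) //= !mxE eqxx add0r lerD2l /s mulr_sumr.
  by apply: ler_sum => a ak; exact: diagb.
have tot : \sum_a \sum_b c a b * Y a b <= \sum_a (c a a * Y a a + n%:R * (s / 2)).
  by apply: ler_sum => a _; exact: inner.
rewrite big_split /= sumr_const card_ord -mulr_natl in tot.
have hPk := hPab k k; have nn : 0 <= n%:R :> R by [].
have e1 : P k k = P k k * (Y k k + s) by rewrite trY' mulr1.
rewrite e1; apply: (le_trans tot).
have : (n%:R * (n%:R * (s / 2))) <= n%:R ^+ 2 * s by nra.
move: diag; case/andP: hPk => h1 h2; nra.
Qed.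

Lemma bwd (Ep Em : {set {set 'I_n}}) (k : 'I_n) :
  (forall e, e \in Ep -> #|e| = 2%N) -> (forall e, e \in Em -> #|e| = 2%N) ->
  (forall j, j != k -> [set k; j] \in Ep :|: Em) ->
  is_vertex (@symmx R n) (Cset Ep Em) (evec R k *m (evec R k)^T).
Proof.
move=> hEp hEm adj; split; first exact: ekk_C.
apply: aff_dim_eq => m; split; first by apply: hai_mono => c [].
move=> [p [pS pf]].
pose K := \sum_i \sum_a \sum_b `|p i a b|.
have K0 : 0 <= K by apply: sumr_ge0 => i _; apply: sumr_ge0 => a _; apply: sumr_ge0.
pose eps := (2 * (K + 1))^-1.
have eps0 : 0 < eps by rewrite invr_gt0; lra.
have epsK : eps * K <= 1 / 2.
  have e : eps * (2 * (K + 1)) = 1 by rewrite /eps mulVf //; lra.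
  nra.
exists (fun i => c0 Ep k + eps *: p i); split.
  move=> i; split; first by rewrite /symmx linearD linearZ /= c0_sym (pS i).
  move=> Y CY; apply: (ball_bound adj _ CY) => a b.
  rewrite mxE normrM gtr0_norm //.
  apply: le_trans epsK; rewrite ler_pM2l //.
  apply: (le_trans _ (sum_ge_term i _)); last first.
    by move=> j; apply: sumr_ge0 => a' _; apply: sumr_ge0.
  apply: (le_trans _ (sum_ge_term a _)); last by move=> a'; apply: sumr_ge0.
  by apply: (le_trans _ (sum_ge_term b _)).
have -> : \matrix_(j < m) mxvec ((c0 Ep k + eps *: p (lift ord0 j)) - (c0 Ep k + eps *: p ord0))
   = eps *: \matrix_(j < m) mxvec (p (lift ord0 j) - p ord0).
  apply/row_matrixP => j; rewrite linearZ !rowK /=.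
  by rewrite rowK opprD addrACA subrr add0r -scalerBr linearZ.
by rewrite /row_free mxrank_scale_nz // lt0r_neq0.
Qed.
End Aff.
Lemma deg_full n (E : {set {set 'I_n}}) (k : 'I_n) :
  (forall e, e \in E -> #|e| = 2) ->
  deg E k = n.-1 <-> (forall j, j != k -> [set k; j] \in E).
Proof.
move=> hE.
pose S := [set j | (j != k) && ([set k; j] \in E)].
have img : [set e in E | k \in e] = [set [set k; j] | j in S].
  apply/setP => e; rewrite inE; apply/andP/imsetP.
    move=> [eE ke]; move/eqP: (hE e eE) => /cards2P [x [y [xy ee]]].
    move: ke; rewrite ee !inE => /orP [] /eqP kx.
      exists y; last by rewrite kx.
      by rewrite inE kx eq_sym xy -ee eE.
    exists x; last by rewrite kx finset.setUC.
    by rewrite inE kx xy finset.setUC -ee eE.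
  move=> [j]; rewrite inE => /andP [jk hj] ->; split => //.
  by rewrite !inE eqxx.
have inj : {in S &, injective (fun j => [set k; j])}.
  move=> j1 j2; rewrite !inE => /andP [j1k _] /andP [j2k _] h.
  have : j1 \in [set k; j1] by rewrite !inE eqxx orbT.
  by rewrite h !inE (negbTE j1k) /= => /eqP.
have cS : deg E k = #|S| by rewrite /deg img card_in_imset.
have sub : S \subset [set~ k] by apply/fintype.subsetP => j; rewrite !inE => /andP [].
rewrite cS; split.
  move=> h j jk.
  have : S == [set~ k].
    by rewrite eqEcard sub cardsC1 h card_ord /=.
  move/eqP => hS; have : j \in [set~ k] by rewrite !inE.
  by rewrite -hS inE => /andP [].
move=> h; have -> : n.-1 = #|[set~ k]| by rewrite cardsC1 card_ord.
suff -> : S = [set~ k] by [].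
apply/finset.setP => j.
rewrite !inE; case: (eqVneq j k) => //= jk; exact: h.
Qed.

Unset Implicit Arguments.

Theorem theorem3p6 (R : realType) (n : nat) (Ep Em : {set {set 'I_n}})
  (hEp : forall e, e \in Ep -> #|e| = 2%N)
  (hEm : forall e, e \in Em -> #|e| = 2%N) :
  forall X : 'M[R]_n,
    is_vertex (@symmx R n) (Cset Ep Em) X <->
    exists k : 'I_n, deg (Ep :|: Em) k = n.-1 /\ X = evec R k *m (evec R k)^T.
Proof.
have hE : forall e, e \in Ep :|: Em -> #|e| = 2%N.
  by move=> e; rewrite inE => /orP [] h; [exact: hEp|exact: hEm].
move=> X; split.
  move=> hv; have [k [adj XE]] := fwd hEp hEm hv.
  by exists k; split => //; apply/(deg_full k hE).
move=> [k [dk ->]]; apply: bwd => //.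
exact/(deg_full k hE).
Qed.
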